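(* Let $1\le p<\infty$ and $\alpha\ge1$. Let $P=\{p_1,\dots,p_n\}$ be a set of points in the closed upper half-plane $\{y\ge0\}$ with pairwise distinct $x$-coordinates, indexed so that the $x$-coordinates increase with the index, and such that no three points of $P$ lie on the boundary of a single $L_p$-disk centered on the $x$-axis. For $1\le i\le j\le n$ let $D(\{p_i,\dots,p_j\})$ denote the smallest $L_p$-disk centered on the $x$-axis containing $p_i,\dots,p_j$. Define $A[n+1]=0$ and, for $1\le i\le n$, $$A[i]=\min_{i\le j\le n}\Big\{ r\big(D(\{p_i,\dots,p_j\})\big)^\alpha + A[j+1]\Big\}.$$ Then $A[1]$ equals the minimum cost of a covering of $P$ by $L_p$-disks centered on the $x$-axis; equivalently, the minimum cost equals the minimum, over all partitions of $(p_1,\dots,p_n)$ into consecutive blocks $\{p_{i},\dots,p_{j}\}$, of the sum over blocks of $r(D(\text{block}))^\alpha$.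
   Context: For $c\in\mathbb{R}$ and $r\ge 0$, the $L_p$-disk centered on the $x$-axis with center $c$ and radius $r$ is $D=\{z\in\mathbb{R}^2 : \|z-(c,0)\|_p\le r\}$; $r(D)=r$ is its radius and its cost is $r^\alpha$. A covering of $P$ is a finite family of such disks whose union contains $P$; its cost is the sum of the costs of its disks. *)

(* Defs.v *)
From Stdlib Require Import Reals List.
Import ListNotations.
Open Scope R_scope.

(* Real power x^y for x >= 0, with the convention 0^y = 0 (used only with y > 0). *)
Definition rpow (x y : R) : R :=
  if Req_EM_T x 0 then 0 else Rpower x y.

Definition lpnorm (p u v : R) : R :=
  rpow (rpow (Rabs u) p + rpow (Rabs v) p) (/ p).

(* A disk centered on the x-axis: (center c, radius r), r >= 0. *)
Definition in_disk (p : R) (d : R * R) (x y : R) : Prop :=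
  lpnorm p (x - fst d) y <= snd d.

Definition on_boundary (p : R) (d : R * R) (x y : R) : Prop :=
  lpnorm p (x - fst d) y = snd d.

(* Points are p_1..p_n with coordinates (px k, py k). *)
Definition contains_block (p : R) (px py : nat -> R) (i j : nat) (d : R * R) : Prop :=
  forall k, (i <= k <= j)%nat -> in_disk p d (px k) (py k).

Definition is_smallest_radius (p : R) (px py : nat -> R) (i j : nat) (rad : R) : Prop :=
  0 <= rad /\
  (exists c, contains_block p px py i j (c, rad)) /\
  (forall c r, 0 <= r -> contains_block p px py i j (c, r) -> rad <= r).

Definition is_covering (p : R) (n : nat) (px py : nat -> R) (F : list (R * R)) : Prop :=
  (forall d, In d F -> 0 <= snd d) /\
  (forall k, (1 <= k <= n)%nat -> exists d, In d F /\ in_disk p d (px k) (py k)).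

Definition cover_cost (alpha : R) (F : list (R * R)) : R :=
  fold_right (fun d s => rpow (snd d) alpha + s) 0 F.

(* A partition of (p_i, ..., p_n) into consecutive blocks [(i1,j1); (i2,j2); ...]. *)
Inductive consec_partition (n : nat) : nat -> list (nat * nat) -> Prop :=
  | cp_nil : consec_partition n (S n) []
  | cp_cons : forall i j rest, (i <= j)%nat -> (j <= n)%nat ->
      consec_partition n (S j) rest -> consec_partition n i ((i, j) :: rest).

Definition partition_cost (alpha : R) (Drad : nat -> nat -> R) (B : list (nat * nat)) : R :=
  fold_right (fun b s => rpow (Drad (fst b) (snd b)) alpha + s) 0 B.

Definition is_min (S : R -> Prop) (m : R) : Prop :=
  S m /\ forall v, S v -> m <= v.

(* Main.v *)
Require Import Defs.
From Stdlib Require Import Reals Lra Lia List Classical.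
From mathcomp Require all_boot all_order all_algebra all_classical all_reals.
From mathcomp Require interval_inference exp convex hoelder Rstruct Rstruct_topology.
Import ListNotations.
Open Scope R_scope.

Module Conv.
From mathcomp Require Import all_boot all_order all_algebra.
From mathcomp Require Import all_classical all_reals.
From mathcomp Require Import interval_inference exp convex hoelder Rstruct Rstruct_topology.
Import Order.TTheory GRing.Theory Num.Theory.

Section Bridge.
Local Open Scope ring_scope.
Lemma rpow_powR (x y : R) : y != 0 -> rpow x y = powR x y.
Proof.
move=> y0; rewrite /rpow /powR.
case: (Req_dec_T x 0) => [->|xn0].
  by rewrite eqxx (negbTE y0).
have -> : (x == 0) = false by apply/eqP.
by rewrite /Rpower RexpE RlnE.
Qed.

Lemma hconv_mc (p a b l : R) : 1 <= p -> 0 <= a -> 0 <= b -> 0 <= l -> l <= 1 ->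
  powR (l*a + (1-l)*b) p <= l * powR a p + (1-l) * powR b p.
Proof.
move=> p1 a0 b0 l0 l1.
have := @convex_powR R p p1 (Itv01 l0 l1) a b.
rewrite !inE /= !in_itv /= !andbT => /(_ a0 b0).
by rewrite !convRE.
Qed.
End Bridge.
Open Scope R_scope.

Lemma hconv (p a b l : R) : 1 <= p -> 0 <= a -> 0 <= b -> 0 <= l -> l <= 1 ->
  rpow (l*a + (1-l)*b) p <= l * rpow a p + (1-l) * rpow b p.
Proof.
intros p1 a0 b0 l0 l1.
assert (pn : (p != 0)%O).
{ assert (h : p <> R0) by lra. apply/eqP; exact h. }
rewrite !(rpow_powR _ _ pn).
apply/RleP. apply: hconv_mc; apply/RleP; auto.
Qed.
End Conv.
Open Scope R_scope.

Lemma rpow_ge0 x y : 0 <= rpow x y.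
Proof. unfold rpow; destruct (Req_EM_T x 0). lra. unfold Rpower; left; apply exp_pos. Qed.

Lemma rpow_0 y : rpow 0 y = 0.
Proof. unfold rpow; destruct (Req_EM_T 0 0); lra. Qed.

Lemma rpow_pos x y : 0 < x -> rpow x y = Rpower x y.
Proof. intros; unfold rpow; destruct (Req_EM_T x 0); [lra|auto]. Qed.

Lemma rpow_gt0 x y : 0 < x -> 0 < rpow x y.
Proof. intros; rewrite rpow_pos by auto; unfold Rpower; apply exp_pos. Qed.

Lemma rpow_le x z y : 0 <= x -> x <= z -> 0 < y -> rpow x y <= rpow z y.
Proof.
  intros hx hxz hy. destruct hx as [hx|hx].
  - rewrite !rpow_pos by lra. apply Rle_Rpower_l; lra.
  - subst. rewrite rpow_0. apply rpow_ge0.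
Qed.

Lemma rpow_lt x z y : 0 <= x -> x < z -> 0 < y -> rpow x y < rpow z y.
Proof.
  intros hx hxz hy. destruct hx as [hx|hx].
  - rewrite !rpow_pos by lra. apply Rlt_Rpower_l; lra.
  - subst. rewrite rpow_0. apply rpow_gt0; lra.
Qed.

Lemma rpow_rpow x a b : 0 <= x -> rpow (rpow x a) b = rpow x (a * b).
Proof.
  intros [hx|hx].
  - rewrite (rpow_pos x a) by lra. rewrite rpow_pos. rewrite rpow_pos by lra. apply Rpower_mult.
    unfold Rpower; apply exp_pos.
  - subst; rewrite !rpow_0; reflexivity.
Qed.

Lemma rpow_1 x : 0 <= x -> rpow x 1 = x.
Proof. intros [hx|hx]. rewrite rpow_pos by lra; apply Rpower_1; lra. subst; apply rpow_0. Qed.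

Lemma lpnorm_ge0 p u v : 0 <= lpnorm p u v.
Proof. apply rpow_ge0. Qed.

Lemma lp_le_iff p u v r : 1 <= p -> 0 <= r ->
  (lpnorm p u v <= r <-> rpow (Rabs u) p + rpow (Rabs v) p <= rpow r p).
Proof.
  intros hp hr. unfold lpnorm.
  set (N := rpow (Rabs u) p + rpow (Rabs v) p).
  assert (hN : 0 <= N) by (unfold N; pose proof (rpow_ge0 (Rabs u) p); pose proof (rpow_ge0 (Rabs v) p); lra).
  split; intro h.
  - apply (rpow_le _ _ p) in h; [|apply rpow_ge0|lra].
    rewrite rpow_rpow in h by auto. rewrite Rinv_l in h by lra. rewrite rpow_1 in h; auto.
  - apply (rpow_le _ _ (/ p)) in h; [|auto|apply Rinv_0_lt_compat; lra].
    rewrite rpow_rpow in h by auto. rewrite Rinv_r in h by lra. rewrite rpow_1 in h; auto.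
Qed.

Definition f (p t : R) := rpow (Rabs t) p.
Definition H (p : R) (d : R * R) (x : R) := rpow (snd d) p - f p (x - fst d).

Lemma in_disk_iff p d x y : 1 <= p -> 0 <= snd d -> 0 <= y ->
  (in_disk p d x y <-> rpow y p <= H p d x).
Proof.
  intros hp hr hy. unfold in_disk, H, f. rewrite lp_le_iff by auto.
  rewrite (Rabs_right y) by lra. split; intro; lra.
Qed.

Lemma fconv p a b l : 1 <= p -> 0 <= l <= 1 ->
  f p (l * a + (1 - l) * b) <= l * f p a + (1 - l) * f p b.
Proof.
  intros hp hl. unfold f.
  eapply Rle_trans.
  - apply rpow_le; [apply Rabs_pos| |lra].
    instantiate (1 := l * Rabs a + (1 - l) * Rabs b).
    eapply Rle_trans; [apply Rabs_triang|].
    rewrite !Rabs_mult, (Rabs_right l), (Rabs_right (1 - l)) by lra. lra.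
  - apply Conv.hconv; try lra; apply Rabs_pos.
Qed.

Lemma four_point p u v d : 1 <= p -> u <= v -> 0 <= d ->
  f p (u + d) + f p v <= f p (v + d) + f p u.
Proof.
  intros hp huv hd.
  destruct (Req_dec (v + d - u) 0) as [e|ne].
  - assert (v = u) by lra. assert (d = 0) by lra. subst. lra.
  - set (L := v + d - u). assert (hL : 0 < L) by (unfold L; lra).
    set (lam := (v - u) / L).
    assert (hlam : 0 <= lam <= 1).
    { unfold lam; split. apply Rmult_le_pos; [lra|left; apply Rinv_0_lt_compat; lra].
      apply Rmult_le_reg_r with L; auto. unfold Rdiv; rewrite Rmult_assoc, Rinv_l by lra. unfold L; lra. }
    assert (e1 : u + d = lam * u + (1 - lam) * (v + d)) by (unfold lam, L; field; lra).
    assert (e2 : v = (1 - lam) * u + (1 - (1 - lam)) * (v + d)) by (unfold lam, L; field; lra).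
    pose proof (fconv p u (v + d) lam hp hlam) as h1.
    pose proof (fconv p u (v + d) (1 - lam) hp ltac:(lra)) as h2.
    rewrite <- e1 in h1. rewrite <- e2 in h2. lra.
Qed.

Lemma f_mono p c1 c2 x x' : 1 <= p -> c1 <= c2 -> x <= x' ->
  f p (x - c1) - f p (x - c2) <= f p (x' - c1) - f p (x' - c2).
Proof.
  intros hp hc hx. pose proof (four_point p (x - c2) (x' - c2) (c2 - c1) hp ltac:(lra) ltac:(lra)) as h.
  replace (x - c2 + (c2 - c1)) with (x - c1) in h by ring.
  replace (x' - c2 + (c2 - c1)) with (x' - c1) in h by ring. lra.
Qed.

Lemma crossing p d e x1 x2 x3 : 1 <= p -> x1 <= x2 -> x2 <= x3 ->
  H p e x1 <= H p d x1 -> H p d x2 < H p e x2 -> H p e x3 < H p d x3 -> False.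
Proof.
  intros hp h12 h23 a b c. unfold H in *.
  destruct (Rle_dec (fst d) (fst e)).
  - pose proof (f_mono p (fst d) (fst e) x2 x3 hp r h23). lra.
  - pose proof (f_mono p (fst e) (fst d) x1 x2 hp ltac:(lra) h12). lra.
Qed.

Lemma argmax p (F : list (R * R)) x : F <> [] ->
  exists d, In d F /\ forall e, In e F -> H p e x <= H p d x.
Proof.
  induction F as [|a F IH]; intro hne; [congruence|].
  destruct F as [|b F'].
  - exists a. split; [left; auto|]. intros e [he|[]]. subst; lra.
  - destruct IH as [d [hd hmax]]; [congruence|].
    destruct (Rle_dec (H p a x) (H p d x)).
    + exists d. split; [right; auto|]. intros e [he|he]; [subst; auto|auto].
    + exists a. split; [left; auto|]. intros e [he|he]; [subst; lra|].
      specialize (hmax e he). lra.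
Qed.

Lemma cost_app alpha l1 d l2 :
  cover_cost alpha (l1 ++ d :: l2) = rpow (snd d) alpha + cover_cost alpha (l1 ++ l2).
Proof. induction l1 as [|a l1 IH]; simpl; [auto|]. rewrite IH. ring. Qed.

Lemma cost_ge0 alpha F : 0 <= cover_cost alpha F.
Proof. induction F; simpl. lra. pose proof (rpow_ge0 (snd a) alpha). lra. Qed.

Lemma exists_run (Q : nat -> Prop) (i n : nat) : (i <= n)%nat -> Q i ->
  exists j, (i <= j <= n)%nat /\ (forall k, (i <= k <= j)%nat -> Q k) /\ (j = n \/ ~ Q (S j)).
Proof.
  intros hin hQ.
  assert (G : forall m j, (i <= j <= n)%nat -> (n - j)%nat = m -> (forall k, (i <= k <= j)%nat -> Q k) ->
    exists j, (i <= j <= n)%nat /\ (forall k, (i <= k <= j)%nat -> Q k) /\ (j = n \/ ~ Q (S j))).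
  { induction m as [|m IH]; intros j hj hm hall.
    - exists j. split; [auto|split; [auto|left; lia]].
    - destruct (classic (Q (S j))) as [hq|hq].
      + apply (IH (S j)); [lia|lia|]. intros k hk. destruct (Nat.eq_dec k (S j)); [subst; auto|apply hall; lia].
      + exists j. split; [auto|split; [auto|right; auto]]. }
  apply (G (n - i)%nat i); [lia|lia|]. intros k hk. replace k with i by lia. auto.
Qed.

Section MainProof.
Variables (p alpha : R) (n : nat) (px py : nat -> R) (Drad : nat -> nat -> R) (A : nat -> R).
Hypothesis hp : 1 <= p.
Hypothesis halpha : 1 <= alpha.
Hypothesis hpy : forall k, (1 <= k <= n)%nat -> 0 <= py k.
Hypothesis hpx : forall k l, (1 <= k)%nat -> (k < l)%nat -> (l <= n)%nat -> px k < px l.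
Hypothesis hD : forall i j, (1 <= i)%nat -> (i <= j)%nat -> (j <= n)%nat ->
     is_smallest_radius p px py i j (Drad i j).
Hypothesis hA0 : A (S n) = 0.
Hypothesis hA : forall i, (1 <= i <= n)%nat ->
     is_min (fun v => exists j, (i <= j <= n)%nat /\ v = rpow (Drad i j) alpha + A (S j)) (A i).

Lemma px_le a b : (1 <= a)%nat -> (a <= b)%nat -> (b <= n)%nat -> px a <= px b.
Proof.
  intros. destruct (Nat.eq_dec a b). subst; lra. left; apply hpx; lia.
Qed.

Lemma lower : forall m i F, (n + 1 - i)%nat = m -> (1 <= i <= S n)%nat ->
  (forall d, In d F -> 0 <= snd d) ->
  (forall k, (i <= k <= n)%nat -> exists d, In d F /\ in_disk p d (px k) (py k)) ->
  A i <= cover_cost alpha F.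
Proof.
  intro m; induction m as [m IH] using (well_founded_induction Wf_nat.lt_wf).
  intros i F hm hi hF hcov.
  destruct (Nat.eq_dec i (S n)) as [ei|ni].
  - subst. rewrite hA0. apply cost_ge0.
  - destruct (hcov i ltac:(lia)) as [d0 [hd0 hin0]].
    destruct (argmax p F (px i)) as [[cD rD] [hDin hmax]].
    { intro e; subst; destruct hd0. }
    assert (hrD : 0 <= rD) by (apply (hF (cD, rD)); auto).
    assert (hy : forall k, (i <= k <= n)%nat -> 0 <= py k) by (intros; apply hpy; lia).
    assert (hQi : in_disk p (cD, rD) (px i) (py i)).
    { assert (hyi: 0 <= py i) by (apply hy; lia).
      assert (hr0 : 0 <= snd d0) by (apply hF; auto).
      apply (proj2 (in_disk_iff p (cD,rD) _ _ hp hrD hyi)).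
      apply (proj1 (in_disk_iff p d0 _ _ hp hr0 hyi)) in hin0.
      pose proof (hmax d0 hd0). lra. }
    destruct (exists_run (fun k => in_disk p (cD, rD) (px k) (py k)) i n ltac:(lia) hQi)
      as [j [hj [hrun hend]]].
    destruct (in_split _ _ hDin) as [l1 [l2 eF]].
    assert (hsub : forall d, In d (l1 ++ l2) -> In d F).
    { intros d h. rewrite eF. apply in_app_or in h. apply in_or_app. destruct h; [left|right; right]; auto. }
    assert (hsplit : forall d, In d F -> d = (cD, rD) \/ In d (l1 ++ l2)).
    { intros d h. rewrite eF in h. apply in_app_or in h. destruct h as [h|[h|h]].
      right; apply in_or_app; left; auto. left; auto. right; apply in_or_app; right; auto. }
    assert (hIH : A (S j) <= cover_cost alpha (l1 ++ l2)).
    { apply (IH (n + 1 - S j)%nat); [lia|lia|lia|intros; apply hF, hsub; auto|].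
      intros k hk. destruct (hcov k ltac:(lia)) as [d [hd hk']].
      destruct (hsplit d hd) as [ed|hd']; [|exists d; auto].
      subst d. destruct hend as [ej|hnq]; [lia|].
      destruct (hcov (S j) ltac:(lia)) as [e [he hine]].
      destruct (hsplit e he) as [ee|he'].
      { subst e. contradiction. }
      exists e. split; auto.
      destruct (classic (in_disk p e (px k) (py k))) as [ok|nok]; auto. exfalso.
      assert (hre : 0 <= snd e) by (apply hF; auto).
      apply (crossing p (cD, rD) e (px i) (px (S j)) (px k) hp).
      + apply px_le; lia.
      + apply px_le; lia.
      + apply hmax; auto.
      + assert (hyi: 0 <= py (S j)) by (apply hy; lia).
        apply (proj1 (in_disk_iff p e _ _ hp hre hyi)) in hine.
        rewrite (in_disk_iff p (cD,rD) _ _ hp hrD hyi) in hnq. lra.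
      + assert (hyi: 0 <= py k) by (apply hy; lia).
        apply (proj1 (in_disk_iff p (cD,rD) _ _ hp hrD hyi)) in hk'.
        rewrite (in_disk_iff p e _ _ hp hre hyi) in nok. lra. }
    destruct (hD i j ltac:(lia) ltac:(lia) ltac:(lia)) as [hD0 [_ hDmin]].
    assert (hle : Drad i j <= rD).
    { apply (hDmin cD rD hrD). intros k hk. apply hrun; auto. }
    destruct (hA i ltac:(lia)) as [_ hAmin].
    assert (hAi : A i <= rpow (Drad i j) alpha + A (S j)) by (apply hAmin; exists j; split; [lia|auto]).
    pose proof (rpow_le (Drad i j) rD alpha hD0 hle ltac:(lra)).
    rewrite eF, cost_app. simpl snd. lra.
Qed.

Lemma part_min : forall m i, (n + 1 - i)%nat = m -> (1 <= i <= S n)%nat ->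
  (exists B, consec_partition n i B /\ A i = partition_cost alpha Drad B) /\
  (forall B, consec_partition n i B -> A i <= partition_cost alpha Drad B).
Proof.
  intro m; induction m as [m IH] using (well_founded_induction Wf_nat.lt_wf).
  intros i hm hi.
  destruct (Nat.eq_dec i (S n)) as [ei|ni].
  - subst. split.
    + exists []. split; [constructor|]. simpl; auto.
    + intros B hB. inversion hB; subst. simpl; lra. lia.
  - destruct (hA i ltac:(lia)) as [[j [hj ej]] hAmin]. split.
    + destruct (IH (n + 1 - S j)%nat ltac:(lia) (S j) eq_refl ltac:(lia)) as [[B [hB eB]] _].
      exists ((i, j) :: B). split. constructor; auto; lia.
      simpl. rewrite ej, eB. auto.
    + intros B hB. inversion hB as [e1|i0 j' rest h1 h2 h3 e1 e2]; [lia|]. subst.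
      destruct (IH (n + 1 - S j')%nat ltac:(lia) (S j') eq_refl ltac:(lia)) as [_ hlow].
      specialize (hlow rest h3). simpl.
      assert (A i <= rpow (Drad i j') alpha + A (S j')) by (apply hAmin; exists j'; split; [lia|auto]).
      lra.
Qed.

Lemma part_cover : forall i B, consec_partition n i B -> (1 <= i)%nat ->
  exists F, (forall d, In d F -> 0 <= snd d) /\
    (forall k, (i <= k <= n)%nat -> exists d, In d F /\ in_disk p d (px k) (py k)) /\
    cover_cost alpha F = partition_cost alpha Drad B.
Proof.
  intros i B hB; induction hB as [|i j rest hij hjn hrest IHr]; intro hi.
  - exists []. split; [intros d []|]. split; [intros; lia|reflexivity].
  - destruct (IHr ltac:(lia)) as [F [hF [hc ec]]].
    destruct (hD i j hi hij hjn) as [h0 [[c hc'] _]].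
    exists ((c, Drad i j) :: F). split; [|split].
    + intros d [ed|ed]; [subst; simpl; auto|auto].
    + intros k hk. destruct (Compare_dec.le_lt_dec k j).
      * exists (c, Drad i j). split; [left; auto|]. apply hc'; lia.
      * destruct (hc k ltac:(lia)) as [d [hd hdk]]. exists d. split; [right|]; auto.
    + simpl. rewrite ec. reflexivity.
Qed.

Theorem main_sec :
  is_min (fun v => exists F, is_covering p n px py F /\ v = cover_cost alpha F) (A 1%nat) /\
  is_min (fun v => exists B, consec_partition n 1 B /\ v = partition_cost alpha Drad B) (A 1%nat).
Proof.
  destruct (part_min (n + 1 - 1)%nat 1 eq_refl ltac:(lia)) as [[B [hB eB]] hlow].
  split; split.
  - destruct (part_cover 1 B hB ltac:(lia)) as [F [hF [hc ec]]].
    exists F. split. split; auto. rewrite ec; auto.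
  - intros v [F [[hF hc] ev]]. subst v.
    apply (lower (n + 1 - 1)%nat 1 F eq_refl ltac:(lia) hF hc).
  - exists B; auto.
  - intros v [B' [hB' ev]]. subst v. auto.
Qed.
End MainProof.

Theorem mainTheorem6 (p alpha : R) (n : nat) (px py : nat -> R)
  (Drad : nat -> nat -> R) (A : nat -> R) :
  1 <= p -> 1 <= alpha ->
  (forall k, (1 <= k <= n)%nat -> 0 <= py k) ->
  (forall k l, (1 <= k)%nat -> (k < l)%nat -> (l <= n)%nat -> px k < px l) ->
  (forall c r a b e, (1 <= a <= n)%nat -> (1 <= b <= n)%nat -> (1 <= e <= n)%nat ->
     a <> b -> a <> e -> b <> e -> 0 <= r ->
     ~ (on_boundary p (c, r) (px a) (py a) /\ on_boundary p (c, r) (px b) (py b) /\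
        on_boundary p (c, r) (px e) (py e))) ->
  (forall i j, (1 <= i)%nat -> (i <= j)%nat -> (j <= n)%nat ->
     is_smallest_radius p px py i j (Drad i j)) ->
  A (S n) = 0 ->
  (forall i, (1 <= i <= n)%nat ->
     is_min (fun v => exists j, (i <= j <= n)%nat /\ v = rpow (Drad i j) alpha + A (S j)) (A i)) ->
  is_min (fun v => exists F, is_covering p n px py F /\ v = cover_cost alpha F) (A 1%nat) /\
  is_min (fun v => exists B, consec_partition n 1 B /\ v = partition_cost alpha Drad B) (A 1%nat).
Proof.
  intros hp ha hpy hpx _ hD hA0 hA.
  exact (main_sec p alpha n px py Drad A hp ha hpy hpx hD hA0 hA).
Qed.
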